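(* Let $q$ be a prime power, $5\le n\le q$, $\alpha_1,\dots,\alpha_n\in\mathbb{F}_q$ distinct, $u_1,\dots,u_n\in\mathbb{F}_q^*$, and $H\in\mathbb{F}_q^{4\times n}$ with $H_{ab}=u_b\alpha_b^{a-1}$ (so $\ker H$ has distance $5$). Then the number of $e\in\mathbb{F}_q^n$ with $|e|=3$ for which there exists $e'\in\mathbb{F}_q^n$ with $|e'|\le 2$ and $He'=He$ is at most $$\frac{(n-3)(n-4)}{2(q-1)^2}\cdot(q-1)^3\binom{n}{3}.$$
   Context: $|e|$ denotes the Hamming weight of $e\in\mathbb{F}_q^n$. *)

(* Defs.v *)
From HB Require Import structures.
From mathcomp Require Import all_boot all_order all_algebra all_field.
Set Implicit Arguments. Unset Strict Implicit. Unset Printing Implicit Defensive.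
Import GRing.Theory Num.Theory.
Local Open Scope ring_scope.

Definition hwt (F : finFieldType) (n : nat) (e : 'rV[F]_n) : nat :=
  #|[set i : 'I_n | e 0 i != 0]|.

(* The 4 x n matrix H with H_{ab} = u_b * alpha_b^(a-1) (rows indexed 0..3) *)
Definition Hmat (F : finFieldType) (n : nat) (alpha u : 'I_n -> F) : 'M[F]_(4, n) :=
  \matrix_(a < 4, b < n) (u b * alpha b ^+ a).

Definition bad_set (F : finFieldType) (n : nat) (alpha u : 'I_n -> F) : {set 'rV[F]_n} :=
  [set e : 'rV[F]_n | (hwt e == 3)%N &&
     [exists e' : 'rV[F]_n, (hwt e' <= 2)%N &&
        (Hmat alpha u *m e'^T == Hmat alpha u *m e^T)]].

(* Main.v *)
Require Import Defs.
From HB Require Import structures.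
From mathcomp Require Import all_boot all_order all_algebra all_field.
From mathcomp Require Import ring zify.
Import Order.TTheory GRing.Theory Num.Theory.
Local Open Scope ring_scope.

Section Aux.
Variable F : finFieldType.
Variable n : nat.
Variables alpha u : 'I_n -> F.
Hypothesis alpha_inj : injective alpha.
Hypothesis u_nz : forall i, u i != 0.

Definition supp (v : 'rV[F]_n) := [set i : 'I_n | v 0 i != 0].

Lemma Hentry (c : 'rV[F]_n) (a : 'I_4) :
  (Hmat alpha u *m c^T) a 0 = \sum_j (u j * alpha j ^+ a) * c 0 j.
Proof. rewrite mxE; apply: eq_bigr => j _; rewrite !mxE //. Qed.

Lemma ker_small c : Hmat alpha u *m c^T = 0 -> (#|supp c| <= 4)%N -> c = 0.
Proof.
move=> hk hs; apply/rowP => j0; rewrite mxE.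
apply/eqP; apply: contraT => hj0.
have j0A : j0 \in supp c by rewrite inE.
set B := supp c :\ j0.
pose P := \prod_(j <- enum B) ('X - (alpha j)%:P).
have sP : (size P <= 4)%N.
  rewrite /P size_prod_XsubC -cardE.
  by move: hs; rewrite (cardsD1 j0 (supp c)) j0A.
have key : \sum_j u j * c 0 j * P.[alpha j] = 0.
  transitivity (\sum_j \sum_(a < 4) P`_a * ((u j * alpha j ^+ a) * c 0 j)).
    apply: eq_bigr => j _; rewrite (horner_coef_wide _ sP) mulr_sumr.
    by apply: eq_bigr => a _; ring.
  rewrite exchange_big /= big1 // => a _.
  by rewrite -mulr_sumr -Hentry hk mxE mulr0.
move: key; rewrite (bigD1 j0) //= big1 ?addr0.
- move/eqP; rewrite !mulf_eq0 (negbTE (u_nz j0)) (negbTE hj0) /=.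
  rewrite horner_prod prodf_seq_eq0 => /hasP [j]; rewrite mem_enum /B !inE.
  move=> /andP[hneq _] /=; rewrite hornerXsubC subr_eq0 => /eqP /alpha_inj h.
  by rewrite h eqxx in hneq.
- move=> j hj; case: (boolP (c 0 j == 0)) => [/eqP -> | hc].
    by rewrite mulr0 mul0r.
  have jB : j \in enum B by rewrite mem_enum /B !inE hj hc.
  by rewrite horner_prod (big_rem _ jB) /= hornerXsubC subrr mul0r mulr0.
Qed.

Definition ep (e : 'rV[F]_n) : 'rV[F]_n :=
  odflt 0 [pick e' | (hwt e' <= 2)%N && (Hmat alpha u *m e'^T == Hmat alpha u *m e^T)].

Lemma bad_props e : e \in bad_set alpha u ->
  [/\ #|supp e| = 3%N, #|supp (ep e)| = 2%N, [disjoint supp e & supp (ep e)]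
    & Hmat alpha u *m (e - ep e)^T = 0].
Proof.
rewrite inE => /andP[/eqP h3 /existsP [e0 he0]].
rewrite /ep; case: pickP => [e' /andP[h2 /eqP hH] | /(_ e0)]; last by rewrite he0.
rewrite /=.
have hk : Hmat alpha u *m (e - e')^T = 0 by rewrite raddfB mulmxBr hH subrr.
have nz : e - e' != 0.
  apply/eqP => /eqP; rewrite subr_eq0 => /eqP ee.
  by move: h2; rewrite -ee h3.
have h5 : (5 <= #|supp (e - e')|)%N.
  rewrite ltnNge; apply: contra nz => h; apply/eqP; exact: ker_small hk h.
have hsub : supp (e - e') \subset supp e :|: supp e'.
  apply/subsetP => i; rewrite !inE !mxE; apply: contraR.
  by rewrite negb_or !negbK => /andP[/eqP -> /eqP ->]; rewrite subrr.
have := subset_leq_card hsub; rewrite cardsU => hle.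
have h3' : #|supp e| = 3%N := h3.
have h2' : (#|supp e'| <= 2)%N := h2.
have hs : #|supp e'| = 2%N by lia.
have hi : #|supp e :&: supp e'| = 0%N by lia.
split=> //; by rewrite -setI_eq0 -cards_eq0 hi.
Qed.


Definition fmap (e : 'rV[F]_n) : {set 'I_n} * {set 'I_n} * F :=
  (supp e, supp (ep e), oapp (fun i => e 0 i) 0 [pick i in supp e]).

Lemma pick_supp e : #|supp e| = 3%N ->
  exists2 t, [pick i in supp e] = Some t & t \in supp e.
Proof.
move=> h3; case: pickP => [t ht | none]; first by exists t.
have [y hy] : exists y, y \in supp e by apply/card_gt0P; rewrite h3.
by move: (none y); rewrite /= hy.
Qed.

Lemma fmap_inj : {in bad_set alpha u &, injective fmap}.
Proof.
move=> e1 e2 h1 h2 [hT hS hx].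
have [t1 _ d1 k1] := bad_props e1 h1.
have [_ _ _ k2] := bad_props e2 h2.
have [t0 ht0 t0T] := pick_supp e1 t1.
rewrite -hT ht0 /= in hx.
have z1 i : i \in supp e1 -> ep e1 0 i = 0 /\ ep e2 0 i = 0.
  move=> hi; have n1 : i \notin supp (ep e1) by rewrite (disjointFr d1 hi).
  have n2 : i \notin supp (ep e2) by rewrite -hS.
  by move: n1 n2; rewrite !inE !negbK => /eqP -> /eqP ->.
have z2 i : i \notin supp e1 -> e1 0 i = 0 /\ e2 0 i = 0.
  move=> hi; have n2 : i \notin supp e2 by rewrite -hT.
  by move: hi n2; rewrite !inE !negbK => /eqP -> /eqP ->.
set d := (e1 - ep e1) - (e2 - ep e2).
have kd : Hmat alpha u *m d^T = 0 by rewrite raddfB mulmxBr k1 k2 subrr.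
have sd : supp d \subset (supp e1 :|: supp (ep e1)) :\ t0.
  apply/subsetP => i; rewrite !inE !mxE => hd.
  case: (boolP (i \in supp e1)) => iT.
    have [a b] := z1 i iT; move: (iT); rewrite inE => -> /=.
    rewrite andbT; apply/eqP => it; move: hd; rewrite it hx.
    by have [a' b'] := z1 t0 t0T; rewrite a' b' oppr0 addrN eqxx.
  have [a b] := z2 i iT.
  apply/andP; split; first by apply/eqP => it; move: iT; rewrite it t0T.
  move: iT; rewrite inE => /negbTE -> /=.
  apply: contraNT hd; rewrite negbK => /eqP a'.
  have : i \notin supp (ep e2) by rewrite -hS inE a' eqxx.
  by rewrite inE negbK => /eqP b'; rewrite a b a' b' !subrr ?eqxx.
have c5 : #|supp e1 :|: supp (ep e1)| = 5%N.
  have [_ s2 _ _] := bad_props e1 h1.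
  by rewrite cardsU t1 s2 (_ : supp e1 :&: _ = set0) ?cards0 //; apply/eqP; rewrite setI_eq0.
have hsd : (#|supp d| <= 4)%N.
  have := subset_leq_card sd.
  have := cardsD1 t0 (supp e1 :|: supp (ep e1)); rewrite c5 inE t0T /=; lia.
have d0 := ker_small d kd hsd.
apply/rowP => i; have := congr1 (fun M : 'rV[F]_n => M 0 i) d0; rewrite !mxE.
case: (boolP (i \in supp e1)) => iT.
  have [a b] := z1 i iT; rewrite a b !subr0 => /eqP; rewrite subr_eq0 => /eqP //.
by have [a b] := z2 i iT; rewrite a b.
Qed.

End Aux.

Arguments fmap {F n} alpha u e.
Arguments bad_props {F n alpha u} _ _ {e}.
Arguments pick_supp {F n e}.
Arguments fmap_inj {F n alpha u}.


Theorem mainTheorem10 (F : finFieldType) (n : nat) (alpha u : 'I_n -> F) :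
  (5 <= n)%N -> (n <= #|F|)%N ->
  injective alpha -> (forall i, u i != 0) ->
  (#|bad_set alpha u|%:R : rat) <=
    (((n - 3) * (n - 4))%N%:R / (2 * (#|F| - 1) ^ 2)%N%:R)
    * (((#|F| - 1) ^ 3) * 'C(n, 3))%N%:R.
Proof.
move=> n5 nq ainj unz.
set B := bad_set alpha u.
pose D (T : {set 'I_n}) := [set S : {set 'I_n} | S \subset ~: T & #|S| == 2%N].
pose Pairs := [set p : {set 'I_n} * {set 'I_n} | (#|p.1| == 3%N) && (p.2 \in D p.1)].
pose NZ := [set x : F | x != 0].
have sub : [set fmap alpha u e | e in B] \subset setX Pairs NZ.
  apply/subsetP => _ /imsetP [e he ->].
  have [t3 s2 dj _] := bad_props ainj unz he.
  rewrite in_setX !inE /= t3 s2 eqxx -disjoints_subset disjoint_sym dj /=.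
  have [t ht tT] := pick_supp t3; rewrite ht /=.
  by rewrite inE in tT.
have cnt : (#|B| <= #|Pairs| * #|NZ|)%N.
  rewrite -cardsX -(card_in_imset (fmap_inj ainj unz)); exact: subset_leq_card.
have cNZ : #|NZ| = (#|F| - 1)%N.
  have -> : NZ = [set~ 0] by apply/setP => x; rewrite !inE.
  by rewrite cardsC1 subn1.
have cP : #|Pairs| = ('C(n,3) * 'C(n-3,2))%N.
  rewrite -sum1_card (eq_bigl (fun p : {set 'I_n} * {set 'I_n} => (#|p.1| == 3%N) && (p.2 \in D p.1))); last first.
    by move=> p; rewrite inE.
  rewrite -(@pair_big_dep _ _ _ _ _ (fun T : {set 'I_n} => #|T| == 3%N) (fun T (S : {set 'I_n}) => S \in D T) (fun _ _ => 1%N)) /=.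
  transitivity (\sum_(T : {set 'I_n} | #|T| == 3%N) 'C(n-3,2))%N.
    apply: eq_bigr => T /eqP hT; rewrite sum1_card cards_draws.
    have := cardsC T; rewrite card_ord hT => h; congr 'C(_,_); lia.
  rewrite (eq_bigl (fun T => T \in [set T : {set 'I_n} | #|T| == 3%N])); last first.
    by move=> T; rewrite inE.
  by rewrite sum_nat_const card_draws card_ord.
have e2 : ((n-3)*(n-4) = 'C(n-3,2) * 2)%N.
  have := bin_ffact (n-3) 2; rewrite ffactnS ffactn1 /=.
  have -> : (n-3).-1 = (n-4)%N by lia.
  by move=> ->.
have Qpos : (0 < #|F| - 1)%N by lia.
apply: (@le_trans _ _ (('C(n,3) * 'C(n-3,2) * (#|F| - 1))%N%:R)).
  by rewrite ler_nat -cNZ -cP.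
rewrite e2 le_eqVlt; apply/orP; left; apply/eqP.
move: Qpos; set Q := (#|F| - 1)%N => Qpos.
have hQ : (Q%:R : rat) != 0 by rewrite pnatr_eq0 -lt0n.
rewrite !natrM; field.
by [].
Qed.
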